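(* Let $f\colon X\to C$ be a relatively minimal elliptic surface, $F\in\operatorname{Num}(X)$ the class of a fibre, and $\lambda=\min\{F\cdot D: D\text{ numerical class of an effective divisor}\}$. For $\mathcal E\in D(X)$ put $d(\mathcal E)=c_1(\mathcal E)\cdot F$. Then: (1) if $\gcd(\lambda\operatorname{rk}(\mathcal E),d(\mathcal E))=\gcd(\operatorname{rk}(\mathcal E),d(\mathcal E))$, there is a relative Fourier--Mukai transform $\Phi$ along $f$ with $\operatorname{rk}(\Phi^{-1}(\mathcal E))=0$; (2) if $\gcd(\lambda\operatorname{rk}(\mathcal E),d(\mathcal E))=\lambda\gcd(\operatorname{rk}(\mathcal E),d(\mathcal E))$, there is a relative Fourier--Mukai transform $\Phi$ along $f$ with $d(\Phi^{-1}(\mathcal E))=0$.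
   Context: Relative Fourier--Mukai transform along $f$: given $\begin{bmatrix} c&a\\ d&b\end{bmatrix}\in \mathrm{SL}_2(\mathbb{Z})$ with $\lambda\mid d$ and $a>0$, let $J_X(a,b)$ be the elliptic surface over $C$ whose fibre over $p\in C$ is a component of the moduli space of stable sheaves of rank $a$ and degree $b$ on $X_p$. There is a sheaf $\mathcal P$ on $X\times J_X(a,b)$, flat and strongly simple over both factors, with $\mathcal P_y$ of Chern class $(0,aF,b)$ on $X$ and $\mathcal P_x$ of Chern class $(0,aF,-c)$ on $J_X(a,b)$; the integral functor $\Phi=\Phi_{\mathcal P}\colon D(J_X(a,b))\to D(X)$ is an equivalence (called a relative Fourier--Mukai transform along $f$), and it satisfies $(\operatorname{rk}\Phi(\mathcal E),d(\Phi(\mathcal E)))^T=\begin{bmatrix} c&a\\ d&b\end{bmatrix}(\operatorname{rk}\mathcal E,d(\mathcal E))^T$ for all $\mathcal E\in D(J_X(a,b))$ (with $d$ on $J_X(a,b)$ defined using the class of a fibre there). Here $\gcd$ of integers is taken nonnegative. *)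

(* Defs.v *)
From HB Require Import structures.
From mathcomp Require Import all_boot all_order all_algebra.
Set Implicit Arguments. Unset Strict Implicit. Unset Printing Implicit Defensive.
Import Order.TTheory GRing.Theory Num.Theory.
Local Open Scope ring_scope.

(* The matrix [[c, a]; [d, b]] is the numerical matrix of a relative
   Fourier--Mukai transform along f (context): it lies in SL_2(Z),
   lambda divides d, and a > 0. *)
Definition rel_FM_matrix (lam c a d b : int) : Prop :=
  c * b - a * d = 1 /\ (lam %| d)%Z /\ 0 < a.

(* Main.v *)
Require Import Defs.
From HB Require Import structures.
From mathcomp Require Import all_boot all_order all_algebra.
From mathcomp Require Import zify ring lra.
Import Order.TTheory GRing.Theory Num.Theory.
Local Open Scope ring_scope.

Theorem lemma3p13 (lam : int) (hlam : 0 < lam)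
  (ObjX : Type) (rkX dX : ObjX -> int)
  (J : int -> int -> int -> int -> Type)
  (rkJ dJ : forall c a d b, J c a d b -> int)
  (Phi : forall c a d b, J c a d b -> ObjX)
  (Phiinv : forall c a d b, ObjX -> J c a d b)
  (hinv : forall c a d b (E : ObjX), rel_FM_matrix lam c a d b ->
     rkX (Phi c a d b (Phiinv c a d b E)) = rkX E /\ dX (Phi c a d b (Phiinv c a d b E)) = dX E)
  (hnum : forall c a d b (G : J c a d b), rel_FM_matrix lam c a d b ->
     rkX (Phi c a d b G) = c * rkJ c a d b G + a * dJ c a d b G /\
     dX (Phi c a d b G) = d * rkJ c a d b G + b * dJ c a d b G)
  (E : ObjX) :
  (gcdz (lam * rkX E) (dX E) = gcdz (rkX E) (dX E) ->
     rkX E = 0 \/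
     exists c a d b, rel_FM_matrix lam c a d b /\ rkJ c a d b (Phiinv c a d b E) = 0) /\
  (gcdz (lam * rkX E) (dX E) = lam * gcdz (rkX E) (dX E) ->
     dX E = 0 \/
     exists c a d b, rel_FM_matrix lam c a d b /\ dJ c a d b (Phiinv c a d b E) = 0).
Proof.
have key : forall c a d b, rel_FM_matrix lam c a d b ->
   rkJ c a d b (Phiinv c a d b E) = b * rkX E - a * dX E /\
   dJ c a d b (Phiinv c a d b E) = c * dX E - d * rkX E.
  move=> c a d b H.
  have [h1 [h2 h3]] := H.
  have [e1 e2] := hinv c a d b E H.
  have [f1 f2] := hnum c a d b (Phiinv c a d b E) H.
  rewrite -e1 -e2 f1 f2.
  set x := rkJ _ _ _ _ _; set y := dJ _ _ _ _ _.
  split.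
    by rewrite -[x in LHS]mul1r -h1; ring.
  by rewrite -[y in LHS]mul1r -h1; ring.
set r := rkX E; set dd := dX E.
set g := gcdz r dd.
have hr : (r %/ g)%Z * g = r by apply: divzK; apply: dvdz_gcdl.
have hd : (dd %/ g)%Z * g = dd by apply: divzK; apply: dvdz_gcdr.
set r' := (r %/ g)%Z in hr; set d' := (dd %/ g)%Z in hd.
split.
- move=> Hg.
  have [-> | rn0] := eqVneq r 0; first by left.
  right.
  have gn0 : g != 0 by rewrite /g gcdz_eq0 negb_and rn0.
  have [u [v huv]] := Bezoutz (lam * r) dd.
  rewrite Hg -/g -hr -hd in huv.
  have e : u * lam * r' + v * d' = 1.
    apply: (mulIf gn0); rewrite mul1r -[RHS]huv; ring.
  have r'n0 : r' != 0 by apply: contraNneq rn0 => h; rewrite -hr h mul0r.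
  have [rp|rn] := ltrP 0 r'.
  + exists v, r', (- (u * lam)), d'; split; last first.
      rewrite (proj1 (key _ _ _ _ _)); last first.
        split; [by rewrite -e; ring | split => //].
        by apply/dvdzP; exists (- u); ring.
      rewrite -/r -/dd -hr -hd; ring.
    split; [by rewrite -e; ring | split => //].
    by apply/dvdzP; exists (- u); ring.
  + have rn' : r' < 0 by rewrite lt_neqAle r'n0 rn.
    have hF : rel_FM_matrix lam (- v) (- r') (u * lam) (- d').
      split; [by rewrite -e; ring | split; last by lia].
      by apply/dvdzP; exists u.
    exists (- v), (- r'), (u * lam), (- d'); split => //.
    rewrite (proj1 (key _ _ _ _ hF)) -/r -/dd -hr -hd; ring.
- move=> Hg.
  have [-> | dn0] := eqVneq dd 0; first by left.
  right.
  have gn0 : g != 0 by rewrite /g gcdz_eq0 negb_and dn0 orbT.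
  have [u0 [v0 huv]] := Bezoutz r dd.
  rewrite -/g -{1}hr -{1}hd in huv.
  have e : u0 * r' + v0 * d' = 1.
    apply: (mulIf gn0); rewrite mul1r -[RHS]huv; ring.
  have : (lam * g %| dd)%Z by rewrite -Hg; apply: dvdz_gcdr.
  rewrite -hd dvdz_mul2r // => /dvdzP [k hk].
  have [r0|r'n0] := eqVneq r' 0.
  + have hF : rel_FM_matrix lam 0 1 (- (v0 * d')) 0.
      split; [by rewrite -[RHS]e r0; ring | split; last by []].
      by apply/dvdzP; exists (- (v0 * k)); rewrite hk; ring.
    exists 0, 1, (- (v0 * d')), 0; split => //.
    rewrite (proj2 (key _ _ _ _ hF)) -/r -/dd -hr -hd r0; ring.
  have [rp|rn] := ltrP 0 r'.
  + set K := v0 * v0 + 1.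
    have hF : rel_FM_matrix lam r' (- v0 + K * r') d' (u0 + K * d').
      split; [by rewrite -e; ring | split].
        by apply/dvdzP; exists k.
      have h0 : 0 <= (v0*v0+1)*(r'-1) by apply: mulr_ge0; [by rewrite addr_ge0 // -expr2 sqr_ge0 | lia].
      have h3 : 0 <= v0*(v0-1) by nia.
      rewrite /K; nia.
    exists r', (- v0 + K * r'), d', (u0 + K * d'); split => //.
    rewrite (proj2 (key _ _ _ _ hF)) -/r -/dd -hr -hd; ring.
  + have rn' : r' < 0 by rewrite lt_neqAle r'n0 rn.
    set K := v0 * v0 + 1.
    have hF : rel_FM_matrix lam (- r') (v0 - K * r') (- d') (- (u0 + K * d')).
      split; [by rewrite -e; ring | split].
        by apply/dvdzP; exists (- k); rewrite hk; ring.
      have h0 : 0 <= (v0*v0+1)*(-r'-1) by apply: mulr_ge0; [by rewrite addr_ge0 // -expr2 sqr_ge0 | lia].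
      have h3 : 0 <= v0*(v0+1) by nia.
      rewrite /K; nia.
    exists (- r'), (v0 - K * r'), (- d'), (- (u0 + K * d')); split => //.
    rewrite (proj2 (key _ _ _ _ hF)) -/r -/dd -hr -hd; ring.
Qed.
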